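(* Fix $\delta>0$ and let $s_\infty:=1/\mathcal E_{\delta,\infty}(\tau_1)$. For every $\varepsilon>0$ there exists $T_0=T_0(\varepsilon)\in\mathbb N$ such that $$\lim_{N\to\infty}\sup_{T\in2\mathbb N,\,T\ge T_0}\mathcal P_{\delta,T}\Big(\Big|\frac{L_N}{N}-s_\infty\Big|>\varepsilon\Big)=0,$$ where $L_N:=\max\{j\ge0:\tau_j\le N\}$.
   Context: $(S_n)$ is the simple symmetric random walk on $\mathbb Z$ started at $0$ with law $\mathbf P$. For $T\in2\mathbb N\cup\{\infty\}$ (convention $\infty\mathbb Z=\{0\}$), $\tau_1^T:=\inf\{n>0:S_n\in T\mathbb Z\}$, $q_T(n):=\mathbf P(\tau^T_1=n)$, $Q_T(\lambda):=\mathbf E[e^{-\lambda\tau^T_1}]$. For $\delta>0$, $\phi(\delta,T)$ is the unique real solution $\lambda$ of $Q_T(\lambda)=e^{-\delta}$. Under $\mathcal P_{\delta,T}$ (expectation $\mathcal E_{\delta,T}$), $(\xi_i)_{i\ge1}$ are i.i.d. with $\mathcal P_{\delta,T}(\xi_1=n)=e^\delta q_T(n)e^{-\phi(\delta,T)n}$, $n\in\mathbb N$; $\tau_0:=0$, $\tau_n:=\xi_1+\dots+\xi_n$. *)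

(* Defs.v *)
From Stdlib Require Import Reals Lra Lia ZArith Arith List Classical ClassicalEpsilon.
Import ListNotations.
Open Scope R_scope.

(* Period T in 2N u {infinity}: [Some t] is the finite period t (t > 0),
   [None] is T = infinity, with the convention infinity*Z = {0}. *)
Definition inTZ (T : option nat) (x : Z) : bool :=
  match T with
  | Some t => Z.eqb (Z.modulo x (Z.of_nat t)) 0
  | None => Z.eqb x 0
  end.

(* All +/-1 step sequences (true = +1, false = -1) of length n. *)
Fixpoint all_steps (n : nat) : list (list bool) :=
  match n with
  | O => [[]]
  | S m => flat_map (fun l => [true :: l; false :: l]) (all_steps m)
  end.

Definition Spos (l : list bool) (k : nat) : Z :=
  fold_right Z.add 0%Z (map (fun b : bool => if b then 1%Z else (-1)%Z) (firstn k l)).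

(* tau_1^T = length l for the path l: S_k notin TZ for 0<k<n, S_n in TZ, n>0. *)
Definition first_hit (T : option nat) (l : list bool) : bool :=
  let n := length l in
  (0 <? n)%nat
  && forallb (fun k => negb (inTZ T (Spos l k))) (seq 1 (n - 1))
  && inTZ T (Spos l n).

(* q_T(n) = P(tau_1^T = n) for the simple symmetric random walk. *)
Definition q (T : option nat) (n : nat) : R :=
  INR (length (filter (first_hit T) (all_steps n))) / 2 ^ n.

(* phi(delta,T): the (unique) real lambda with Q_T(lambda) = e^{-delta},
   where Q_T(lambda) = sum_n q_T(n) e^{-lambda n}. *)
Definition phi (delta : R) (T : option nat) : R :=
  epsilon (inhabits 0%R)
    (fun lam => infinite_sum (fun n => q T n * exp (- (lam * INR n))) (exp (- delta))).

(* P_{delta,T}(xi_1 = n) *)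
Definition pxi (delta : R) (T : option nat) (n : nat) : R :=
  exp delta * q T n * exp (- (phi delta T * INR n)).

(* E_{delta,T}(tau_1) = sum_n n P(xi_1 = n) *)
Definition mean_xi (delta : R) (T : option nat) : R :=
  epsilon (inhabits 0%R)
    (fun m => infinite_sum (fun n => INR n * pxi delta T n) m).

(* Lists (x_1,...,x_k) of positive integers with x_1+...+x_k <= m. *)
Fixpoint comps (k m : nat) : list (list nat) :=
  match k with
  | O => [[]]
  | S k' => flat_map (fun x => map (cons x) (comps k' (m - x))) (seq 1 m)
  end.

Definition prodR (f : nat -> R) (l : list nat) : R :=
  fold_right Rmult 1 (map f l).

Definition sumR (l : list R) : R := fold_right Rplus 0 l.

(* P_{delta,T}(tau_k <= m), using independence of the xi_i. *)
Definition P_tau_le (delta : R) (T : option nat) (k m : nat) : R :=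
  sumR (map (prodR (pxi delta T)) (comps k m)).

(* P_{delta,T}(L_N = k) = P(tau_k <= N) - P(tau_{k+1} <= N),
   where L_N = max{j >= 0 : tau_j <= N}. *)
Definition P_L_eq (delta : R) (T : option nat) (N k : nat) : R :=
  P_tau_le delta T k N - P_tau_le delta T (S k) N.

(* P_{delta,T}(|L_N/N - s| > eps); since xi_i >= 1, L_N <= N. *)
Definition P_dev (delta : R) (T : option nat) (N : nat) (s eps : R) : R :=
  sumR (map (fun k => if Rlt_dec eps (Rabs (INR k / INR N - s))
                      then P_L_eq delta T N k else 0)
            (seq 0 (S N))).

(* Main.v *)
Require Import Defs.
From Stdlib Require Import Reals Lra Lia ZArith Arith List Classical ClassicalEpsilon FunctionalExtensionality.
Import ListNotations.
Open Scope R_scope.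

Lemma sumR_cons x l : sumR (x::l) = x + sumR l.
Proof. reflexivity. Qed.
Lemma sumR_nil : sumR [] = 0.
Proof. reflexivity. Qed.

Lemma sumR_app l1 l2 : sumR (l1 ++ l2) = sumR l1 + sumR l2.
Proof. induction l1; simpl; rewrite ?sumR_cons, ?sumR_nil; [lra| rewrite IHl1; lra]. Qed.

Lemma sumR_map_flat {A B} (f : B -> R) (g : A -> list B) L :
  sumR (map f (flat_map g L)) = sumR (map (fun a => sumR (map f (g a))) L).
Proof. induction L; simpl; auto. rewrite map_app, sumR_app, IHL. reflexivity. Qed.

Lemma sumR_plus {A} (f g : A -> R) L :
  sumR (map (fun a => f a + g a) L) = sumR (map f L) + sumR (map g L).
Proof. induction L; simpl; rewrite ?sumR_cons, ?sumR_nil; [lra|rewrite IHL; lra]. Qed.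

Lemma sumR_zero {A} (L : list A) : sumR (map (fun _ => 0) L) = 0.
Proof. induction L; simpl; rewrite ?sumR_cons, ?sumR_nil; [lra|rewrite IHL; lra]. Qed.

Lemma sumR_ext_in {A} (f g : A -> R) L : (forall a, In a L -> f a = g a) ->
  sumR (map f L) = sumR (map g L).
Proof. intro H. f_equal. apply map_ext_in. exact H. Qed.

Lemma all_steps_len n l : In l (all_steps n) -> length l = n.
Proof.
  revert l; induction n; simpl; intros l H.
  - destruct H as [<-|[]]; reflexivity.
  - apply in_flat_map in H. destruct H as [l' [H1 H2]].
    simpl in H2. destruct H2 as [<-|[<-|[]]]; simpl; f_equal; auto.
Qed.

Lemma sum_all_steps_S (f : list bool -> R) n :
  sumR (map f (all_steps (S n))) = sumR (map (fun l => f (true::l) + f (false::l)) (all_steps n)).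
Proof. simpl (all_steps (S n)). rewrite sumR_map_flat. f_equal. apply map_ext. intro l. simpl. lra. Qed.

Lemma len_filter {A} (P : A -> bool) L :
  INR (length (filter P L)) = sumR (map (fun l => if P l then 1 else 0) L).
Proof. induction L as [|a L IHL]; [reflexivity|]. cbn [filter map sumR]. destruct (P a).
  - cbn [length]. rewrite S_INR, IHL, sumR_cons. lra.
  - rewrite IHL, sumR_cons. lra. Qed.

Definition sgn (b:bool) : Z := if b then 1%Z else (-1)%Z.

Definition fh (A : Z -> bool) (l : list bool) : bool :=
  ((0 <? length l)%nat && forallb (fun k => negb (A (Spos l k))) (seq 1 (length l - 1))
  && A (Spos l (length l)))%bool.

Lemma forallb_mapS (f : nat -> bool) s : forallb f (map S s) = forallb (fun k => f (S k)) s.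
Proof. induction s; simpl; auto. rewrite IHs; auto. Qed.

Lemma fh_cons A b l : fh A (b::l) =
  match l with [] => A (sgn b)
  | _ => (negb (A (sgn b)) && fh (fun z => A (sgn b + z)%Z) l)%bool end.
Proof.
  unfold fh. destruct l as [|c l'].
  - destruct b; reflexivity.
  - remember (c::l') as l. simpl length.
    assert (Hl : (length l = S (length l - 1))%nat) by (subst; simpl; lia).
    rewrite Hl. replace (S (S (length l - 1)) - 1)%nat with (S (length l - 1)) by lia.
    simpl seq. rewrite <- (seq_shift (length l - 1) 1). simpl forallb. rewrite forallb_mapS, Nat.sub_0_r.
    replace (Spos (b::l) 1) with (sgn b) by (destruct b; reflexivity).
    change (fun k => negb (A (Spos (b::l) (S k)))) with (fun k => negb (A (sgn b + Spos l k)%Z)).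
    change (Spos (b :: l) (S (S (length l - 1)))) with (sgn b + Spos l (S (length l - 1)))%Z.
    simpl. destruct (negb (A (sgn b))), (forallb _ _); reflexivity.
Qed.

Definition ind (b:bool) : R := if b then 1 else 0.

Definition HP (A : Z -> bool) (n:nat) : R :=
  sumR (map (fun l => ind (fh A l)) (all_steps n)) / 2^n.

Lemma q_HP T n : q T n = HP (inTZ T) n.
Proof. unfold q, HP. rewrite len_filter. reflexivity. Qed.

Lemma HP_ext A B n : (forall z, A z = B z) -> HP A n = HP B n.
Proof. intro H. apply functional_extensionality in H. subst. reflexivity. Qed.

Lemma HP_0 A : HP A 0 = 0.
Proof. unfold HP. simpl. unfold Rdiv. rewrite Rinv_1. lra. Qed.

Lemma sumR_ind_scal {A} (b:bool) (f : A -> R) L :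
  sumR (map (fun l => if b then 0 else f l) L) = if b then 0 else sumR (map f L).
Proof. destruct b; [apply sumR_zero|reflexivity]. Qed.

Lemma HP_S A n : HP A (S n) = /2 * (
   (match n with O => ind (A 1%Z) | _ => if A 1%Z then 0 else HP (fun z => A (1+z)%Z) n end) +
   (match n with O => ind (A (-1)%Z) | _ => if A (-1)%Z then 0 else HP (fun z => A (-1+z)%Z) n end)).
Proof.
  unfold HP at 1. rewrite sum_all_steps_S. destruct n.
  - cbn [all_steps map]. rewrite sumR_cons, sumR_nil, !fh_cons. simpl sgn. simpl pow. lra.
  - rewrite (sumR_ext_in _ (fun l => (if A 1%Z then 0 else ind (fh (fun z => A(1+z)%Z) l))
          + (if A (-1)%Z then 0 else ind (fh (fun z => A(-1+z)%Z) l)))).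
    2:{ intros l Hl. apply all_steps_len in Hl. destruct l as [|c l']; [discriminate|].
        rewrite !fh_cons. cbv beta iota. simpl sgn. unfold ind.
        destruct (A 1%Z), (A (-1)%Z); reflexivity. }
    rewrite sumR_plus, !sumR_ind_scal. unfold HP.
    assert (0 < 2 ^ S n) by (apply pow_lt; lra).
    change (2 ^ S (S n)) with (2 * 2 ^ S n).
    destruct (A 1%Z), (A (-1)%Z); field; lra.
Qed.

Definition HPx (A : Z -> bool) (x : Z) (n : nat) : R := HP (fun z => A (x+z)%Z) n.

Definition gstep A (y:Z) (n:nat) : R :=
  match n with O => ind (A y) | _ => if A y then 0 else HPx A y n end.

Lemma HPx_0 A x : HPx A x 0 = 0.
Proof. apply HP_0. Qed.

Lemma HPx_S A x n : HPx A x (S n) = /2 * (gstep A (x+1)%Z n + gstep A (x-1)%Z n).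
Proof.
  unfold HPx at 1. rewrite HP_S. unfold gstep. replace (x + -1)%Z with (x-1)%Z by ring.
  destruct n; [reflexivity|]. unfold HPx.
  rewrite (HP_ext (fun z => A (x + (1 + z))%Z) (fun z => A (x + 1 + z)%Z))
    by (intro z; f_equal; ring).
  rewrite (HP_ext (fun z => A (x + (-1 + z))%Z) (fun z => A (x - 1 + z)%Z))
    by (intro z; f_equal; ring).
  reflexivity.
Qed.

Fixpoint sv (A : Z -> bool) (x : Z) (n : nat) : R :=
  match n with O => 1
  | S m => /2 * ((if A (x+1)%Z then 0 else sv A (x+1)%Z m) + (if A (x-1)%Z then 0 else sv A (x-1)%Z m)) end.

Lemma sum_shift f n : sum_f_R0 f (S n) = f 0%nat + sum_f_R0 (fun j => f (S j)) n.
Proof. induction n; simpl in *; [lra|]. rewrite IHn. lra. Qed.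

Lemma sum_zero n : sum_f_R0 (fun _ => 0) n = 0.
Proof. induction n; simpl; lra. Qed.

Lemma sum_scal_l c f n : sum_f_R0 (fun j => c * f j) n = c * sum_f_R0 f n.
Proof. induction n; simpl; [lra|]. rewrite IHn. lra. Qed.

Lemma HP_sv : forall n A x, sum_f_R0 (HPx A x) n + sv A x n = 1.
Proof.
  induction n as [|n IH]; intros A x.
  - simpl. rewrite HPx_0. lra.
  - rewrite sum_shift, HPx_0.
    rewrite (sum_eq (fun j => HPx A x (S j)) (fun j => /2*(gstep A (x+1) j + gstep A (x-1) j)))
      by (intros; apply HPx_S).
    rewrite sum_scal_l, sum_plus.
    assert (G : forall y, sum_f_R0 (gstep A y) n = if A y then 1 else 1 - sv A y n).
    { intro y. specialize (IH A y). destruct n as [|n'].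
      - simpl. unfold gstep, ind. destruct (A y); lra.
      - rewrite sum_shift. rewrite sum_shift, HPx_0 in IH. unfold gstep at 1. unfold ind.
        destruct (A y) eqn:E.
        + rewrite (sum_eq _ (fun _ => 0)) by (intros; unfold gstep; rewrite E; reflexivity).
          rewrite sum_zero. lra.
        + rewrite (sum_eq _ (fun j => HPx A y (S j))) by (intros; unfold gstep; rewrite E; reflexivity).
          lra. }
    rewrite !G. simpl sv. destruct (A (x+1)%Z), (A (x-1)%Z); lra.
Qed.

Lemma HPx_local A B t : (forall z, (Z.abs z < Z.of_nat t)%Z -> A z = B z) ->
  forall n x, (Z.abs x + Z.of_nat n < Z.of_nat t)%Z -> HPx A x n = HPx B x n.
Proof.
  intros H n. induction n as [|n IH]; intros x Hx.
  - rewrite !HPx_0. reflexivity.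
  - rewrite !HPx_S. unfold gstep. destruct n.
    + rewrite (H (x+1)%Z), (H (x-1)%Z) by lia. reflexivity.
    + rewrite (H (x+1)%Z), (H (x-1)%Z), (IH (x+1)%Z), (IH (x-1)%Z) by lia. reflexivity.
Qed.

Lemma q_HPx T n : q T n = HPx (inTZ T) 0 n.
Proof. rewrite q_HP. unfold HPx. apply HP_ext. intro z. reflexivity. Qed.

Lemma inTZ_small t z : (0 < t)%nat -> (Z.abs z < Z.of_nat t)%Z -> inTZ (Some t) z = inTZ None z.
Proof.
  intros Ht Hz. unfold inTZ. destruct (Z.eqb_spec z 0) as [->|Hn].
  - rewrite Zmod_0_l. reflexivity.
  - apply Z.eqb_neq. intro Hm. apply Z.mod_divide in Hm; [|lia].
    destruct Hm as [k Hk]. subst z. assert (k = 0%Z) by nia. subst. lia.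
Qed.

Lemma q_eq t n : (n < t)%nat -> q (Some t) n = q None n.
Proof.
  intro H. rewrite !q_HPx. apply (HPx_local _ _ t).
  - intros z Hz. apply inTZ_small; lia.
  - simpl. lia.
Qed.

Lemma sumR_nonneg L : Forall (fun x => 0 <= x) L -> 0 <= sumR L.
Proof. induction 1; simpl; rewrite ?sumR_cons, ?sumR_nil; lra. Qed.

Lemma HP_nonneg A n : 0 <= HP A n.
Proof.
  unfold HP. apply Rmult_le_pos.
  - apply sumR_nonneg. apply Forall_forall. intros x Hx. apply in_map_iff in Hx.
    destruct Hx as [l [<- _]]. unfold ind. destruct (fh A l); lra.
  - left. apply Rinv_0_lt_compat, pow_lt. lra.
Qed.

Lemma sv_nonneg : forall n A x, 0 <= sv A x n.
Proof.
  induction n; intros A x; simpl; [lra|].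
  specialize (IHn A (x+1)%Z) as H1. specialize (IHn A (x-1)%Z) as H2.
  destruct (A (x+1)%Z), (A (x-1)%Z); lra.
Qed.

Lemma sv_le1 : forall n A x, sv A x n <= 1.
Proof.
  induction n; intros A x; simpl; [lra|].
  specialize (IHn A (x+1)%Z) as H1. specialize (IHn A (x-1)%Z) as H2.
  destruct (A (x+1)%Z), (A (x-1)%Z); lra.
Qed.

Lemma sum_ge_last f n : (forall j, 0 <= f j) -> f n <= sum_f_R0 f n.
Proof.
  intro H. destruct n; simpl; [lra|].
  assert (0 <= sum_f_R0 f n) by (apply cond_pos_sum; auto). lra.
Qed.

Lemma q_nonneg T n : 0 <= q T n.
Proof. rewrite q_HP. apply HP_nonneg. Qed.

Lemma q_le1 T n : q T n <= 1.
Proof.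
  rewrite q_HPx. pose proof (HP_sv n (inTZ T) 0%Z).
  pose proof (sv_nonneg n (inTZ T) 0%Z).
  pose proof (sum_ge_last (HPx (inTZ T) 0%Z) n (fun j => HP_nonneg _ j)). lra.
Qed.

Lemma q_0 T : q T 0 = 0.
Proof. rewrite q_HP. apply HP_0. Qed.

Lemma q_None_2 : q None 2 = /2.
Proof.
  rewrite q_HPx. rewrite HPx_S. unfold gstep. simpl inTZ. cbn -[HPx].
  rewrite !HPx_S. unfold gstep, ind. simpl. lra.
Qed.

Lemma q_sum_sv n : sum_f_R0 (q None) n = 1 - sv (inTZ None) 0 n.
Proof.
  pose proof (HP_sv n (inTZ None) 0%Z).
  rewrite (sum_eq _ (HPx (inTZ None) 0)) by (intros; apply q_HPx). lra.
Qed.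

Definition A0 := inTZ None.
Definition AT (t:Z) (z:Z) : bool := ((z <=? 0)%Z || (t <=? z)%Z)%bool.

Lemma sv_sym : forall n x, sv A0 (-x) n = sv A0 x n.
Proof.
  induction n as [|n IH]; intros x; [reflexivity|]. simpl sv.
  replace (-x+1)%Z with (-(x-1))%Z by ring. replace (-x-1)%Z with (-(x+1))%Z by ring.
  rewrite !IH. unfold A0, inTZ.
  replace ((- (x-1)) =? 0)%Z with ((x-1) =? 0)%Z by (destruct (Z.eqb_spec (x-1) 0), (Z.eqb_spec (-(x-1)) 0); auto; lia).
  replace ((- (x+1)) =? 0)%Z with ((x+1) =? 0)%Z by (destruct (Z.eqb_spec (x+1) 0), (Z.eqb_spec (-(x+1)) 0); auto; lia).
  lra.
Qed.

Lemma IZR_nonneg z : (0 <= z)%Z -> 0 <= IZR z.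
Proof. intro. apply IZR_le in H. exact H. Qed.

Lemma claimB t : forall n x, (1 <= x <= t-1)%Z -> INR n * sv (AT t) x n <= IZR (x*(t-x)).
Proof.
  induction n as [|n IH]; intros x Hx.
  - simpl. rewrite Rmult_0_l. apply IZR_nonneg. nia.
  - assert (T : forall y, (0 <= y <= t)%Z ->
       (INR n + 1) * (if AT t y then 0 else sv (AT t) y n) <= IZR (y*(t-y)) + 1).
    { intros y Hy. destruct (AT t y) eqn:E; unfold AT in E.
      - rewrite Rmult_0_r. assert (y*(t-y) = 0)%Z
          by (destruct (Z.leb_spec y 0), (Z.leb_spec t y); simpl in E; try discriminate; nia).
        rewrite H. simpl. lra.
      - assert (1 <= y <= t-1)%Z
          by (destruct (Z.leb_spec y 0), (Z.leb_spec t y); simpl in E; try discriminate; lia).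
        pose proof (IH y H). pose proof (sv_le1 n (AT t) y). lra. }
    pose proof (T (x+1)%Z ltac:(lia)). pose proof (T (x-1)%Z ltac:(lia)).
    rewrite S_INR. simpl sv.
    assert (E : IZR ((x+1)*(t-(x+1))) + IZR ((x-1)*(t-(x-1))) = 2 * IZR (x*(t-x)) - 2).
    { rewrite <- plus_IZR. replace 2 with (IZR 2) by reflexivity.
      rewrite <- mult_IZR, <- minus_IZR. f_equal. ring. }
    lra.
Qed.

Lemma claimA t : (1 <= t)%Z -> forall n x, (1 <= x <= t)%Z ->
  sv A0 x n <= IZR x / IZR t + (if (x <? t)%Z then sv (AT t) x n else 0).
Proof.
  intros Ht n. induction n as [|n IH]; intros x Hx.
  - simpl. assert (0 < IZR t) by (apply IZR_lt; lia).
    destruct (Z.ltb_spec x t).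
    + assert (0 <= IZR x / IZR t) by (apply Rmult_le_pos; [apply IZR_nonneg; lia| left; apply Rinv_0_lt_compat; lra]). lra.
    + assert (x = t) by lia. subst. unfold Rdiv. rewrite Rinv_r; lra.
  - assert (0 < IZR t) by (apply IZR_lt; lia).
    destruct (Z.ltb_spec x t).
    2:{ assert (x = t) by lia. subst. unfold Rdiv. rewrite Rinv_r by lra.
        pose proof (sv_le1 (S n) A0 t). lra. }
    assert (T : forall y, (0 <= y <= t)%Z ->
      (if A0 y then 0 else sv A0 y n) <= IZR y / IZR t + (if AT t y then 0 else sv (AT t) y n)).
    { intros y Hy. destruct (A0 y) eqn:E0; destruct (AT t y) eqn:E; unfold A0, inTZ, AT in E0, E.
      - rewrite (proj1 (Z.eqb_eq _ _) E0). unfold Rdiv. rewrite Rmult_0_l. lra.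
      - apply Z.eqb_eq in E0. subst. simpl in E. discriminate.
      - assert (y = t) by (apply Z.eqb_neq in E0;
          destruct (Z.leb_spec y 0), (Z.leb_spec t y); simpl in E; try discriminate; lia).
        subst. unfold Rdiv. rewrite Rinv_r by lra.
        pose proof (sv_le1 n A0 t). lra.
      - assert (1 <= y <= t-1)%Z by (apply Z.eqb_neq in E0;
          destruct (Z.leb_spec y 0), (Z.leb_spec t y); simpl in E; try discriminate; lia).
        specialize (IH y ltac:(lia)). destruct (Z.ltb_spec y t); [|lia]. exact IH. }
    pose proof (T (x+1)%Z ltac:(lia)). pose proof (T (x-1)%Z ltac:(lia)).
    simpl sv.
    assert (E : IZR (x+1) / IZR t + IZR (x-1) / IZR t = 2 * (IZR x / IZR t)).
    { rewrite plus_IZR, minus_IZR. field. lra. }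
    lra.
Qed.

Lemma recurrence : forall e, 0 < e -> exists M, sv A0 0 M < e.
Proof.
  intros e He.
  destruct (INR_unbounded (2/e)) as [k Hk].
  set (t := (Z.of_nat k + 2)%Z).
  assert (Ht : IZR t > 2/e). { unfold t. rewrite plus_IZR, <- INR_IZR_INZ. simpl. lra. }
  assert (Ht0 : 0 < IZR t). { assert (0 < 2/e) by (apply Rdiv_lt_0_compat; lra). lra. }
  destruct (INR_unbounded (2 * IZR t / e)) as [n Hn].
  assert (Hn0 : 0 < INR n). { assert (0 < 2 * IZR t / e) by (apply Rdiv_lt_0_compat; lra). lra. }
  exists (S n). simpl sv. unfold A0, inTZ. simpl Z.eqb. cbv iota.
  pose proof (claimA t ltac:(unfold t; lia) n 1%Z ltac:(unfold t; lia)).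
  pose proof (claimB t n 1%Z ltac:(unfold t; lia)).
  replace (1 <? t)%Z with true in H by (symmetry; apply Z.ltb_lt; unfold t; lia).
  change (inTZ None) with A0.
  assert (H1 : IZR 1 / IZR t < e/2).
  { assert (e*IZR t > e * (2/e)) by (apply Rmult_lt_compat_l; lra).
    replace (e*(2/e)) with 2 in H1 by (field; lra).
    assert (e/2 - IZR 1/IZR t = (e*IZR t - 2)/(2*IZR t)) by (simpl; field; lra).
    assert (0 < (e*IZR t - 2)/(2*IZR t)) by (apply Rdiv_lt_0_compat; lra). lra. }
  assert (H2 : sv (AT t) 1 n < e/2).
  { replace (1 * (t - 1))%Z with (t-1)%Z in H0 by ring. rewrite minus_IZR in H0. simpl in H0.
    assert (Hen : e*INR n > e * (2 * IZR t/e)) by (apply Rmult_lt_compat_l; lra).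
    replace (e * (2 * IZR t/e)) with (2 * IZR t) in Hen by (field; lra).
    assert (sv (AT t) 1 n <= (IZR t - 1) / INR n).
    { apply (Rmult_le_reg_l (INR n)); auto. replace (INR n * ((IZR t - 1) / INR n)) with (IZR t - 1) by (field; lra). lra. }
    assert (e/2 - (IZR t - 1)/INR n = (e * INR n - 2 * IZR t + 2)/(2*INR n)) by (field; lra).
    assert (0 < (e * INR n - 2 * IZR t + 2)/(2*INR n)) by (apply Rdiv_lt_0_compat; lra). lra. }
  change (fun x : Z => (x =? 0)%Z) with A0. pose proof (sv_sym n 1%Z) as Hs. simpl in Hs. rewrite Hs. lra.
Qed.

Lemma exp_le x y : x <= y -> exp x <= exp y.
Proof. intros [H|H]; [left; apply exp_increasing; auto| subst; lra]. Qed.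

Lemma exp_pow_nat c n : exp c ^ n = exp (c * INR n).
Proof.
  induction n; simpl. rewrite Rmult_0_r, exp_0. reflexivity.
  rewrite IHn, <- exp_plus. f_equal. destruct n; simpl; ring.
Qed.

Lemma x_le_exp x : x <= exp x.
Proof. pose proof (exp_ineq1_le x). lra. Qed.

Definition E (c:R) := 1 / (1 - exp (- c)).

Lemma exp_neg_lt1 c : 0 < c -> exp (-c) < 1.
Proof. intro. rewrite <- exp_0. apply exp_increasing. lra. Qed.

Lemma E_pos c : 0 < c -> 0 < E c.
Proof. intro. unfold E. pose proof (exp_neg_lt1 c H). apply Rdiv_lt_0_compat; lra. Qed.

Lemma geom c M : 0 < c -> sum_f_R0 (fun n => exp (- (c * INR n))) M <= E c.
Proof.
  intro Hc. rewrite (sum_eq _ (fun n => exp (-c) ^ n)) by (intros; rewrite exp_pow_nat; f_equal; ring).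
  pose proof (exp_neg_lt1 c Hc). pose proof (exp_pos (-c)).
  rewrite tech3 by lra. unfold E.
  assert (0 < exp (-c) ^ S M) by (apply pow_lt; lra).
  unfold Rdiv. apply Rmult_le_compat_r; [left; apply Rinv_0_lt_compat; lra| lra].
Qed.

Lemma n_exp_b b n : 0 < b -> INR n * exp (- (b * INR n)) <= 1/b.
Proof.
  intro Hb. pose proof (x_le_exp (b * INR n)). pose proof (exp_pos (b*INR n)).
  assert (exp (- (b * INR n)) = / exp (b * INR n)) by (apply exp_Ropp).
  rewrite H1. apply (Rmult_le_reg_l b); auto.
  replace (b * (INR n * / exp (b * INR n))) with (b * INR n / exp (b * INR n)) by (field; lra).
  replace (b * (1/b)) with 1 by (field; lra).
  apply (Rmult_le_reg_r (exp (b * INR n))); auto. unfold Rdiv.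
  rewrite Rmult_assoc, Rinv_l by lra. lra.
Qed.

Lemma split_exp c n : exp (- (c * INR n)) = exp (- (c/2 * INR n)) * exp (- (c/2 * INR n)).
Proof. rewrite <- exp_plus. f_equal. field. Qed.

Lemma n_exp c n : 0 < c -> INR n * exp (- (c * INR n)) <= (2/c) * exp (- (c/2 * INR n)).
Proof.
  intro Hc. rewrite split_exp, <- Rmult_assoc.
  pose proof (n_exp_b (c/2) n ltac:(lra)). pose proof (exp_pos (- (c/2 * INR n))).
  replace (2/c) with (1/(c/2)) by (field; lra).
  apply Rmult_le_compat_r; lra.
Qed.

Lemma n2_exp c n : 0 < c -> INR n ^ 2 * exp (- (c * INR n)) <= (4/c)^2 * exp (- (c/2 * INR n)).
Proof.
  intro Hc.
  replace (exp (- (c * INR n))) with (exp (- (c/4 * INR n)) * exp (- (c/4 * INR n)) * exp (- (c/2 * INR n)))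
    by (rewrite <- !exp_plus; f_equal; field).
  pose proof (n_exp_b (c/4) n ltac:(lra)).
  pose proof (exp_pos (- (c/4 * INR n))). pose proof (exp_pos (- (c/2 * INR n))).
  pose proof (pos_INR n).
  replace (4/c) with (1/(c/4)) by (field; lra).
  replace (INR n ^ 2 * (exp (- (c / 4 * INR n)) * exp (- (c / 4 * INR n)) * exp (- (c / 2 * INR n))))
    with ((INR n * exp (- (c / 4 * INR n))) * (INR n * exp (- (c / 4 * INR n))) * exp (- (c / 2 * INR n))) by ring.
  apply Rmult_le_compat_r; [lra|]. simpl. rewrite Rmult_1_r.
  apply Rmult_le_compat; try lra; apply Rmult_le_pos; lra.
Qed.

Lemma cv_const c : Un_cv (fun _ => c) c.
Proof. intros e He. exists 0%nat. intros. unfold Rdist. rewrite Rminus_diag, Rabs_R0. lra. Qed.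

Lemma conv_bounded f B : (forall n, 0 <= f n) -> (forall M, sum_f_R0 f M <= B) ->
  exists l, infinite_sum f l /\ l <= B.
Proof.
  intros H0 HB.
  assert (G : Un_growing (sum_f_R0 f)). { intro n. simpl. pose proof (H0 (S n)). lra. }
  assert (U : has_ub (sum_f_R0 f)). { exists B. intros x [n ->]. apply HB. }
  destruct (growing_cv _ G U) as [l Hl]. exists l. split; [exact Hl|].
  apply (Rle_cv_lim HB Hl (cv_const B)).
Qed.

Lemma lim_le_of_partial f l B : infinite_sum f l -> (forall M, sum_f_R0 f M <= B) -> l <= B.
Proof. intros Hl HB. apply (Rle_cv_lim HB Hl (cv_const B)). Qed.

Lemma partial_le_lim f l M : infinite_sum f l -> (forall n, 0 <= f n) -> sum_f_R0 f M <= l.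
Proof. intros. apply sum_incr; auto. Qed.

Lemma abs_bnd a b : Rabs a <= b -> -b <= a <= b.
Proof. intro H. pose proof (Rle_abs a). pose proof (Rle_abs (-a)). rewrite Rabs_Ropp in H1. lra. Qed.

Lemma lim_diff_bound f g l1 l2 B : infinite_sum f l1 -> infinite_sum g l2 ->
  (forall M, Rabs (sum_f_R0 f M - sum_f_R0 g M) <= B) -> Rabs (l1 - l2) <= B.
Proof.
  intros H1 H2 HB.
  pose proof (CV_minus _ _ _ _ H1 H2) as D.
  apply Rabs_le. split.
  - apply (@Rle_cv_lim (fun _ => -B) (fun i => sum_f_R0 f i - sum_f_R0 g i) _ _); [|apply cv_const| exact D].
    intro n. pose proof (HB n). apply abs_bnd in H. simpl. lra.
  - apply (@Rle_cv_lim (fun i => sum_f_R0 f i - sum_f_R0 g i) (fun _ => B) _ _); [|exact D|apply cv_const].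
    intro n. pose proof (HB n). apply abs_bnd in H. simpl. lra.
Qed.

Lemma infsum_scal c f l : infinite_sum f l -> infinite_sum (fun n => c * f n) (c * l).
Proof.
  intro H. unfold infinite_sum in *.
  change (Un_cv (sum_f_R0 (fun n => c * f n)) (c*l)).
  apply (Un_cv_ext (fun n => c * sum_f_R0 f n)).
  - intro n. symmetry. apply sum_scal_l.
  - apply (CV_mult (fun _ => c) (sum_f_R0 f)); [apply cv_const| exact H].
Qed.

Lemma infsum_ext f g l : (forall n, f n = g n) -> infinite_sum f l -> infinite_sum g l.
Proof.
  intros E H. change (Un_cv (sum_f_R0 g) l). apply (Un_cv_ext (sum_f_R0 f)); auto.
  intro n. apply sum_eq. intros; auto.
Qed.

Lemma infsum_unique f l1 l2 : infinite_sum f l1 -> infinite_sum f l2 -> l1 = l2.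
Proof. intros. apply (UL_sequence (sum_f_R0 f)); auto. Qed.

Definition qok (q : nat -> R) := forall n, 0 <= q n <= 1.

Definition Qf (q : nat -> R) (lam : R) : R :=
  epsilon (inhabits 0) (fun l => infinite_sum (fun n => q n * exp (- (lam * INR n))) l).

Lemma Qf_spec q lam : qok q -> 0 < lam ->
  infinite_sum (fun n => q n * exp (- (lam * INR n))) (Qf q lam).
Proof.
  intros Hq Hl. unfold Qf. apply epsilon_spec.
  destruct (conv_bounded (fun n => q n * exp (- (lam * INR n))) (E lam)) as [l [Hl1 _]].
  - intro n. pose proof (Hq n). pose proof (exp_pos (- (lam * INR n))). apply Rmult_le_pos; lra.
  - intro M. eapply Rle_trans; [|apply (geom lam M Hl)]. apply sum_Rle. intros n _.
    pose proof (Hq n). pose proof (exp_pos (- (lam * INR n))).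
    rewrite <- (Rmult_1_l (exp _)) at 2. apply Rmult_le_compat_r; lra.
  - exists l; auto.
Qed.

Lemma exp_diff u v w : w <= u -> w <= v -> Rabs (exp (-u) - exp (-v)) <= Rabs (u - v) * exp (-w).
Proof.
  intros Hu Hv.
  assert (K : forall u v, w <= u -> u <= v -> exp (-u) - exp (-v) <= (v - u) * exp (-w)).
  { clear. intros u v Hu Huv.
    replace (exp (-u) - exp (-v)) with (exp (-u) * (1 - exp (-(v-u)))) by
      (rewrite Rmult_minus_distr_l, <- exp_plus; f_equal; [ring| f_equal; ring]).
    pose proof (exp_ineq1_le (-(v-u))). pose proof (exp_pos (-u)).
    assert (exp (-u) <= exp (-w)) by (apply exp_le; lra).
    apply Rle_trans with (exp (-u) * (v-u)).
    - apply Rmult_le_compat_l; lra.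
    - rewrite Rmult_comm. apply Rmult_le_compat_l; lra. }
  destruct (Rle_dec u v).
  - assert (exp (-v) <= exp (-u)) by (apply exp_le; lra).
    rewrite Rabs_pos_eq by lra. rewrite Rabs_left1 by lra.
    replace (- (u - v)) with (v - u) by ring. apply K; lra.
  - assert (exp (-u) <= exp (-v)) by (apply exp_le; lra).
    rewrite Rabs_left1 by lra. rewrite Rabs_pos_eq by lra.
    replace (- (exp (-u) - exp (-v))) with (exp (-v) - exp (-u)) by ring. apply K; lra.
Qed.

Lemma Qf_lip q a lam mu : qok q -> 0 < a -> a <= lam -> a <= mu ->
  Rabs (Qf q lam - Qf q mu) <= Rabs (lam - mu) * (2/a * E (a/2)).
Proof.
  intros Hq Ha Hl Hm.
  apply (lim_diff_bound _ _ _ _ _ (Qf_spec q lam Hq ltac:(lra)) (Qf_spec q mu Hq ltac:(lra))).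
  intro M. rewrite <- minus_sum. eapply Rle_trans; [apply Rabs_triang_gen|].
  apply Rle_trans with (sum_f_R0 (fun n => Rabs (lam - mu) * (2/a) * exp (- (a/2 * INR n))) M).
  - apply sum_Rle. intros n _.
    pose proof (Hq n). pose proof (pos_INR n).
    rewrite <- Rmult_minus_distr_l, Rabs_mult, (Rabs_pos_eq (q n)) by lra.
    pose proof (exp_diff (lam * INR n) (mu * INR n) (a * INR n)
       ltac:(apply Rmult_le_compat_r; lra) ltac:(apply Rmult_le_compat_r; lra)).
    replace (lam * INR n - mu * INR n) with ((lam - mu) * INR n) in H1 by ring.
    rewrite Rabs_mult, (Rabs_pos_eq (INR n)) in H1 by lra.
    pose proof (n_exp a n Ha). pose proof (Rabs_pos (lam - mu)).
    pose proof (Rabs_pos (exp (- (lam * INR n)) - exp (- (mu * INR n)))).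
    apply Rle_trans with (1 * (Rabs (lam - mu) * INR n * exp (- (a * INR n)))).
    + apply Rmult_le_compat; lra.
    + rewrite Rmult_1_l, Rmult_assoc, Rmult_assoc. apply Rmult_le_compat_l; auto.
  - rewrite sum_scal_l, Rmult_assoc. apply Rmult_le_compat_l; [apply Rabs_pos|]. apply Rmult_le_compat_l.
    + left; apply Rdiv_lt_0_compat; lra.
    + apply geom. lra.
Qed.

Lemma Qf_tail q1 q2 T c mu : qok q1 -> qok q2 -> (forall n, (n < T)%nat -> q1 n = q2 n) ->
  0 < c -> c <= mu -> Rabs (Qf q1 mu - Qf q2 mu) <= exp (-(c/2 * INR T)) * E (c/2).
Proof.
  intros H1 H2 HT Hc Hm.
  apply (lim_diff_bound _ _ _ _ _ (Qf_spec q1 mu H1 ltac:(lra)) (Qf_spec q2 mu H2 ltac:(lra))).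
  intro M. rewrite <- minus_sum. eapply Rle_trans; [apply Rabs_triang_gen|].
  apply Rle_trans with (sum_f_R0 (fun n => exp (-(c/2 * INR T)) * exp (- (c/2 * INR n))) M).
  - apply sum_Rle. intros n _.
    pose proof (exp_pos (-(c/2 * INR T))). pose proof (exp_pos (- (c/2 * INR n))).
    destruct (lt_dec n T).
    + rewrite HT by auto. rewrite Rminus_diag, Rabs_R0. apply Rmult_le_pos; lra.
    + rewrite <- Rmult_minus_distr_r, Rabs_mult, (Rabs_pos_eq (exp _)) by (left; apply exp_pos).
      pose proof (H1 n). pose proof (H2 n).
      assert (Rabs (q1 n - q2 n) <= 1) by (apply Rabs_le; lra).
      assert (INR T <= INR n) by (apply le_INR; lia). pose proof (pos_INR T).
      rewrite <- exp_plus. pose proof (exp_pos (- (mu * INR n))).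
      apply Rle_trans with (1 * exp (- (mu * INR n))).
      * apply Rmult_le_compat_r; lra.
      * rewrite Rmult_1_l. apply exp_le.
        assert (c * INR n <= mu * INR n) by (apply Rmult_le_compat_r; lra).
        assert (c/2 * INR T <= c/2 * INR n) by (apply Rmult_le_compat_l; lra). lra.
  - rewrite sum_scal_l. apply Rmult_le_compat_l; [left; apply exp_pos|]. apply geom. lra.
Qed.

Lemma lip_cont f K : 0 <= K -> (forall x y, Rabs (f x - f y) <= K * Rabs (x - y)) -> continuity f.
Proof.
  intros HK H x. unfold continuity_pt, continue_in, limit1_in, limit_in. intros e He.
  exists (e / (K+1)). split; [apply Rdiv_lt_0_compat; lra|].
  intros y [_ Hy]. simpl in *. unfold Rdist in *.
  eapply Rle_lt_trans; [apply H|].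
  apply Rle_lt_trans with (K * (e/(K+1))).
  - apply Rmult_le_compat_l; lra.
  - assert (K * (e/(K+1)) = e - e/(K+1)) by (field; lra).
    assert (0 < e/(K+1)) by (apply Rdiv_lt_0_compat; lra). lra.
Qed.

Lemma Rmax_lip a x y : Rabs (Rmax a x - Rmax a y) <= Rabs (x - y).
Proof.
  unfold Rmax. destruct (Rle_dec a x), (Rle_dec a y); apply Rabs_le;
  pose proof (Rle_abs (x-y)); pose proof (Rle_abs (-(x-y))); rewrite Rabs_Ropp in *; lra.
Qed.

Lemma ivt_root q a b r : qok q -> 0 < a -> a < b -> r < Qf q a -> Qf q b < r ->
  exists z, a <= z <= b /\ infinite_sum (fun n => q n * exp (- (z * INR n))) r.
Proof.
  intros Hq Ha Hab H1 H2.
  set (f := fun x => r - Qf q (Rmax a x)).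
  assert (Hc : continuity f).
  { apply (lip_cont f (2/a * E (a/2))).
    - left. apply Rmult_lt_0_compat; [apply Rdiv_lt_0_compat; lra| apply E_pos; lra].
    - intros x y. unfold f.
      replace (r - Qf q (Rmax a x) - (r - Qf q (Rmax a y))) with (-(Qf q (Rmax a x) - Qf q (Rmax a y))) by ring.
      rewrite Rabs_Ropp.
      eapply Rle_trans; [apply (Qf_lip q a); auto; apply Rmax_l|].
      rewrite Rmult_comm. apply Rmult_le_compat_l; [left; apply Rmult_lt_0_compat; [apply Rdiv_lt_0_compat; lra| apply E_pos; lra]|].
      apply Rmax_lip. }
  assert (fa : f a < 0). { unfold f. rewrite Rmax_left by lra. lra. }
  assert (fb : 0 < f b). { unfold f. rewrite Rmax_right by lra. lra. }
  destruct (IVT f a b Hc Hab fa fb) as [z [Hz Hfz]].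
  exists z. split; auto. unfold f in Hfz. rewrite Rmax_right in Hfz by lra.
  replace r with (Qf q z) by lra. apply Qf_spec; auto; lra.
Qed.

Lemma exp_tail_small K C e : 0 < K -> 0 < C -> 0 < e ->
  exists T0, forall T, (T0 <= T)%nat -> exp (-(K*INR T)) * C < e.
Proof.
  intros HK HC He. destruct (INR_unbounded (C/(K*e))) as [T0 H0]. exists T0. intros T HT.
  apply le_INR in HT. pose proof (exp_ineq1_le (K * INR T)).
  assert (0 < C / (K*e)) by (apply Rdiv_lt_0_compat; nra).
  assert (K * INR T > K * (C/(K*e))) by (apply Rmult_lt_compat_l; lra).
  replace (K * (C/(K*e))) with (C/e) in H2 by (field; lra).
  assert (exp (K*INR T) > C/e) by lra.
  rewrite exp_Ropp. pose proof (exp_pos (K*INR T)).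
  apply (Rmult_lt_reg_l (exp (K*INR T))); auto.
  replace (exp (K * INR T) * (/ exp (K * INR T) * C)) with C by (field; lra).
  apply (Rmult_lt_reg_r (/e)). apply Rinv_0_lt_compat; lra.
  replace (exp (K * INR T) * e * / e) with (exp (K*INR T)) by (field; lra). unfold Rdiv in H3. lra.
Qed.

Lemma qok_q T : qok (q T).
Proof. intro n. split; [apply q_nonneg| apply q_le1]. Qed.

Lemma Qf_lower_M q a M : qok q -> 0 < a ->
  exp (- (a * INR M)) * sum_f_R0 q M <= Qf q a.
Proof.
  intros Hq Ha. eapply Rle_trans; [|apply (partial_le_lim _ _ M (Qf_spec q a Hq Ha))].
  - rewrite <- sum_scal_l. apply sum_Rle. intros n Hn. rewrite Rmult_comm.
    apply Rmult_le_compat_l; [apply Hq|]. apply exp_le.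
    assert (INR n <= INR M) by (apply le_INR; lia). nra.
  - intro n. apply Rmult_le_pos; [apply Hq| left; apply exp_pos].
Qed.

Lemma Qf_upper q b : qok q -> q 0%nat = 0 -> 0 < b -> Qf q b <= exp (-b) * E b.
Proof.
  intros Hq H0 Hb. apply (lim_le_of_partial _ _ _ (Qf_spec q b Hq Hb)).
  pose proof (E_pos b Hb). pose proof (exp_pos (-b)).
  intros [|M].
  - simpl. rewrite H0. nra.
  - rewrite sum_shift. rewrite H0, Rmult_0_l, Rplus_0_l.
    eapply Rle_trans; [|apply Rmult_le_compat_l; [left; apply exp_pos| apply (geom b M Hb)]].
    rewrite <- sum_scal_l. apply sum_Rle. intros n _.
    replace (exp (- (b * INR (S n)))) with (exp (-b) * exp (- (b * INR n)))
      by (rewrite <- exp_plus, S_INR; f_equal; ring).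
    pose proof (exp_pos (- (b * INR n))). pose proof (Hq (S n)).
    rewrite <- Rmult_assoc, (Rmult_comm (q (S n))), Rmult_assoc.
    apply Rmult_le_compat_l; [lra|]. rewrite <- (Rmult_1_l (exp (- (b * INR n)))) at 2.
    apply Rmult_le_compat_r; lra.
Qed.

Lemma exp_m1_lt : exp (-1) < /2.
Proof.
  replace (exp (-1)) with (/ exp 1) by (rewrite <- exp_Ropp; f_equal; ring).
  pose proof (exp_ineq1 1 ltac:(lra)).
  apply Rinv_lt_contravar; nra.
Qed.

Lemma phi_None_spec delta : 0 < delta ->
  infinite_sum (fun n => q None n * exp (- (phi delta None * INR n))) (exp (- delta)).
Proof.
  intro Hd. unfold phi. apply epsilon_spec.
  set (r := exp (-delta)).
  assert (Hr1 : r < 1) by (apply exp_neg_lt1; auto). assert (Hr0 : 0 < r) by apply exp_pos.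
  destruct (recurrence ((1-r)/2) ltac:(lra)) as [M HM].
  pose proof (pos_INR M).
  set (a := (1-r)/(4*(INR M + 1))).
  assert (Ha : 0 < a) by (apply Rdiv_lt_0_compat; lra).
  assert (HaM : a * INR M <= (1-r)/4).
  { unfold a. apply (Rmult_le_reg_r (4*(INR M + 1))); [lra|].
    replace ((1 - r) / (4 * (INR M + 1)) * INR M * (4 * (INR M + 1))) with ((1-r) * INR M) by (field; lra).
    replace ((1 - r) / 4 * (4 * (INR M + 1))) with ((1-r) * (INR M + 1)) by field. nra. }
  assert (Qa : r < Qf (q None) a).
  { pose proof (Qf_lower_M (q None) a M (qok_q None) Ha).
    rewrite q_sum_sv in H0. fold A0 in H0.
    pose proof (exp_ineq1_le (- (a * INR M))). pose proof (sv_nonneg M A0 0).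
    assert (exp (- (a * INR M)) * (1 - sv A0 0 M) >= (1 - (1-r)/4) * ((1+r)/2)).
    { apply Rle_ge. apply Rmult_le_compat; lra. }
    nra. }
  set (b := delta + 1).
  assert (Qb : Qf (q None) b < r).
  { pose proof (Qf_upper (q None) b (qok_q None) (q_0 None) ltac:(unfold b; lra)).
    unfold E in H0. replace (exp (-b)) with (r * exp (-1)) in H0
      by (unfold r, b; rewrite <- exp_plus; f_equal; ring).
    pose proof exp_m1_lt. pose proof (exp_pos (-1)).
    assert (r * exp (-1) * (1 / (1 - r * exp (-1))) < r).
    { assert (0 < 1 - r * exp (-1)) by nra.
      apply (Rmult_lt_reg_r (1 - r * exp (-1))); auto.
      replace (r * exp (-1) * (1 / (1 - r * exp (-1))) * (1 - r * exp (-1))) with (r * exp (-1)) by (field; lra).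
      nra. }
    lra. }
  assert (Hab : a < b).
  { assert (a <= (1-r)/4).
    { unfold a. apply (Rmult_le_reg_r (4*(INR M + 1))); [lra|].
      replace ((1 - r) / (4 * (INR M + 1)) * (4 * (INR M + 1))) with (1-r) by (field; lra).
      replace ((1 - r) / 4 * (4 * (INR M + 1))) with ((1-r) * (INR M + 1)) by field. nra. }
    unfold b. lra. }
  destruct (ivt_root (q None) a b r (qok_q None) Ha Hab Qa Qb) as [z [_ Hz]].
  exists z. exact Hz.
Qed.

Lemma lam_pos delta : 0 < delta -> 0 < phi delta None.
Proof.
  intro Hd. pose proof (phi_None_spec delta Hd) as H.
  set (lam := phi delta None) in *.
  destruct (Rlt_le_dec 0 lam) as [|Hl]; auto. exfalso.
  set (r := exp (-delta)) in *.
  assert (Hr1 : r < 1) by (apply exp_neg_lt1; auto).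
  destruct (recurrence (1-r) ltac:(lra)) as [M HM].
  assert (sum_f_R0 (fun n => q None n * exp (- (lam * INR n))) M <= r).
  { apply partial_le_lim; auto. intro n. apply Rmult_le_pos; [apply q_nonneg| left; apply exp_pos]. }
  assert (sum_f_R0 (q None) M <= sum_f_R0 (fun n => q None n * exp (- (lam * INR n))) M).
  { apply sum_Rle. intros n _. rewrite <- (Rmult_1_r (q None n)) at 1.
    apply Rmult_le_compat_l; [apply q_nonneg|]. rewrite <- exp_0. apply exp_le.
    pose proof (pos_INR n). nra. }
  rewrite q_sum_sv in H1. fold A0 in H1. lra.
Qed.

Lemma Qf_gap q l1 l2 : qok q -> 0 < l1 -> l1 <= l2 ->
  Qf q l2 + q 2%nat * (exp (- (l1 * 2)) - exp (- (l2 * 2))) <= Qf q l1.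
Proof.
  intros Hq H1 H12.
  set (d := fun n => q n * exp (- (l1 * INR n)) - q n * exp (- (l2 * INR n))).
  assert (Hd : Un_cv (sum_f_R0 d) (Qf q l1 - Qf q l2)).
  { apply (Un_cv_ext (fun M => sum_f_R0 (fun n => q n * exp (- (l1 * INR n))) M
                              - sum_f_R0 (fun n => q n * exp (- (l2 * INR n))) M)).
    - intro M. unfold d. symmetry. apply minus_sum.
    - apply CV_minus; apply Qf_spec; auto; lra. }
  assert (Hdn : forall n, 0 <= d n).
  { intro n. unfold d. rewrite <- Rmult_minus_distr_l. apply Rmult_le_pos; [apply Hq|].
    assert (exp (- (l2 * INR n)) <= exp (- (l1 * INR n))); [|lra].
    apply exp_le. pose proof (pos_INR n). nra. }
  pose proof (sum_incr d 2 _ Hd Hdn). pose proof (sum_ge_last d 2 Hdn).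
  unfold d in H0 at 1. rewrite <- Rmult_minus_distr_l in H0.
  replace (INR 2) with 2 in H0 by (simpl; ring). lra.
Qed.

Lemma phi_T_close delta eta : 0 < delta -> 0 < eta -> eta <= phi delta None / 2 ->
  exists T0, forall t, (T0 <= t)%nat ->
    infinite_sum (fun n => q (Some t) n * exp (-(phi delta (Some t) * INR n))) (exp (-delta)) /\
    phi delta None - eta <= phi delta (Some t) <= phi delta None + eta.
Proof.
  intros Hd He Hel.
  pose proof (lam_pos delta Hd) as HL. pose proof (phi_None_spec delta Hd) as HS.
  set (L := phi delta None) in *. set (r := exp (-delta)) in *.
  assert (QL : Qf (q None) L = r) by (apply (infsum_unique _ _ _ (Qf_spec _ _ (qok_q None) HL) HS)).
  pose proof (Qf_gap (q None) (L-eta) L (qok_q None) ltac:(lra) ltac:(lra)) as G1.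
  pose proof (Qf_gap (q None) L (L+eta) (qok_q None) ltac:(lra) ltac:(lra)) as G2.
  rewrite q_None_2, QL in G1, G2.
  set (d1 := / 2 * (exp (- ((L - eta) * 2)) - exp (- (L * 2)))) in G1.
  set (d2 := / 2 * (exp (- (L * 2)) - exp (- ((L + eta) * 2)))) in G2.
  assert (Hd1 : 0 < d1). { unfold d1. assert (exp (- (L * 2)) < exp (- ((L - eta) * 2))) by (apply exp_increasing; lra). lra. }
  assert (Hd2 : 0 < d2). { unfold d2. assert (exp (- ((L + eta) * 2)) < exp (- (L * 2))) by (apply exp_increasing; lra). lra. }
  destruct (exp_tail_small (L/2/2) (E (L/2/2)) (Rmin d1 d2) ltac:(lra) (E_pos (L/2/2) ltac:(lra))
     ltac:(apply Rmin_pos; auto)) as [T0 HT0].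
  exists T0. intros t Ht. specialize (HT0 t Ht).
  pose proof (Rmin_l d1 d2). pose proof (Rmin_r d1 d2).
  assert (Hqe : forall n, (n < t)%nat -> q (Some t) n = q None n) by (intros; apply q_eq; auto).
  pose proof (Qf_tail (q (Some t)) (q None) t (L/2) (L-eta) (qok_q _) (qok_q _) Hqe ltac:(lra) ltac:(lra)) as T1.
  pose proof (Qf_tail (q (Some t)) (q None) t (L/2) (L+eta) (qok_q _) (qok_q _) Hqe ltac:(lra) ltac:(lra)) as T2.
  apply abs_bnd in T1. apply abs_bnd in T2.
  assert (A1 : r < Qf (q (Some t)) (L - eta)) by lra.
  assert (A2 : Qf (q (Some t)) (L + eta) < r) by lra.
  destruct (ivt_root (q (Some t)) (L-eta) (L+eta) r (qok_q _) ltac:(lra) ltac:(lra) A1 A2) as [z [_ Hz]].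
  assert (Hphi : infinite_sum (fun n => q (Some t) n * exp (-(phi delta (Some t) * INR n))) r).
  { unfold phi. apply epsilon_spec. exists z. exact Hz. }
  split; [exact Hphi|].
  set (p := phi delta (Some t)) in *.
  split.
  - destruct (Rle_lt_dec (L - eta) p) as [|Hp]; auto. exfalso.
    assert (Qf (q (Some t)) (L - eta) <= r); [|lra].
    apply (Rle_cv_lim (Un := sum_f_R0 (fun n => q (Some t) n * exp (- ((L-eta) * INR n))))
                      (Vn := sum_f_R0 (fun n => q (Some t) n * exp (- (p * INR n))))).
    + intro M. apply sum_Rle. intros n _. apply Rmult_le_compat_l; [apply q_nonneg|].
      apply exp_le. pose proof (pos_INR n). nra.
    + apply Qf_spec; [apply qok_q| lra].
    + exact Hphi.
  - destruct (Rle_lt_dec p (L + eta)) as [|Hp]; auto. exfalso.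
    assert (r <= Qf (q (Some t)) (L + eta)); [|lra].
    apply (Rle_cv_lim (Un := sum_f_R0 (fun n => q (Some t) n * exp (- (p * INR n))))
                      (Vn := sum_f_R0 (fun n => q (Some t) n * exp (- ((L+eta) * INR n))))).
    + intro M. apply sum_Rle. intros n _. apply Rmult_le_compat_l; [apply q_nonneg|].
      apply exp_le. pose proof (pos_INR n). nra.
    + exact Hphi.
    + apply Qf_spec; [apply qok_q| lra].
Qed.

Lemma sumR_scal {A} c (f : A -> R) L : sumR (map (fun x => c * f x) L) = c * sumR (map f L).
Proof. induction L; simpl; rewrite ?sumR_cons, ?sumR_nil; [ring|rewrite IHL; ring]. Qed.

Lemma sum_seq f m : sum_f_R0 f m = sumR (map f (seq 0 (S m))).
Proof.
  induction m.
  - simpl. ring.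
  - rewrite seq_S, map_app, sumR_app, <- IHm. simpl. ring.
Qed.

Lemma sumR_seq1 f m : sumR (map f (seq 1 m)) = sum_f_R0 f m - f 0%nat.
Proof. rewrite sum_seq. simpl. ring. Qed.

Section Chernoff.
Variable a : nat -> R.
Variable P : nat -> nat -> R.
Hypothesis a_nonneg : forall n, 0 <= a n.
Hypothesis a_0 : a 0%nat = 0.
Hypothesis a_sum : infinite_sum a 1.
Hypothesis P_0 : forall m, P 0%nat m = 1.
Hypothesis P_S : forall k m, P (S k) m = sum_f_R0 (fun x => a x * P k (m - x)%nat) m.

Lemma P_nonneg : forall k m, 0 <= P k m.
Proof.
  induction k; intro m; [rewrite P_0; lra|]. rewrite P_S. apply cond_pos_sum.
  intro n. apply Rmult_le_pos; auto.
Qed.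

Lemma a_partial m : sum_f_R0 a m <= 1.
Proof. apply partial_le_lim; auto. Qed.

Lemma P_decr : forall k m, P (S k) m <= P k m.
Proof.
  induction k; intro m.
  - rewrite P_S, P_0. rewrite (sum_eq _ a) by (intros; rewrite P_0; ring). apply a_partial.
  - rewrite (P_S (S k)), (P_S k). apply sum_Rle. intros n _. apply Rmult_le_compat_l; auto.
Qed.

Lemma P_zero : forall k m, (m < k)%nat -> P k m = 0.
Proof.
  induction k; intros m Hm; [lia|]. rewrite P_S.
  rewrite (sum_eq _ (fun _ => 0)); [apply sum_zero|].
  intros i Hi. destruct i; [rewrite a_0; ring|]. rewrite IHk by lia. ring.
Qed.

Lemma chernoff_up th G : 0 <= th -> 0 <= G ->
  (forall m, sum_f_R0 (fun x => a x * exp (- (th * INR x))) m <= G) ->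
  forall k m, P k m <= exp (th * INR m) * G ^ k.
Proof.
  intros Hth HG HS. induction k; intro m.
  - rewrite P_0. simpl. rewrite Rmult_1_r. rewrite <- exp_0. apply exp_le.
    pose proof (pos_INR m). nra.
  - rewrite P_S.
    apply Rle_trans with (sum_f_R0 (fun x => (exp (th * INR m) * G ^ k) * (a x * exp (- (th * INR x)))) m).
    + apply sum_Rle. intros n Hn. specialize (IHk (m - n)%nat).
      rewrite minus_INR in IHk by lia.
      replace (exp (th * (INR m - INR n))) with (exp (th * INR m) * exp (- (th * INR n))) in IHk
        by (rewrite <- exp_plus; f_equal; ring).
      pose proof (a_nonneg n).
      apply Rle_trans with (a n * (exp (th * INR m) * exp (- (th * INR n)) * G ^ k)).
      * apply Rmult_le_compat_l; auto.
      * right. ring.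
    + rewrite sum_scal_l. simpl. rewrite (Rmult_comm G), <- Rmult_assoc.
      apply Rmult_le_compat_l; [apply Rmult_le_pos; [left; apply exp_pos| apply pow_le; auto]|]. apply HS.
Qed.

Lemma cv_shift u l m : Un_cv u l -> Un_cv (fun M => u (M + m)%nat) l.
Proof. intros H e He. destruct (H e He) as [N HN]. exists N. intros n Hn. apply HN. lia. Qed.

Lemma tail_cmp f g lf lg m : infinite_sum f lf -> infinite_sum g lg ->
  (forall x, (m < x)%nat -> f x <= g x) -> lf - sum_f_R0 f m <= lg - sum_f_R0 g m.
Proof.
  intros Hf Hg H.
  apply (Rle_cv_lim (Un := fun M => sum_f_R0 f (M + m) - sum_f_R0 f m)
                    (Vn := fun M => sum_f_R0 g (M + m) - sum_f_R0 g m)).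
  - induction n; simpl; [lra|]. pose proof (H (S (n + m)) ltac:(lia)). lra.
  - apply CV_minus; [apply cv_shift; exact Hf| apply cv_const].
  - apply CV_minus; [apply cv_shift; exact Hg| apply cv_const].
Qed.

Lemma chernoff_low th H : 0 <= th ->
  infinite_sum (fun x => a x * exp (th * INR x)) H ->
  forall k m, 1 - P k m <= exp (- (th * INR m)) * H ^ k.
Proof.
  intros Hth HH.
  assert (H1 : 1 <= H).
  { apply (Rle_cv_lim (Un := sum_f_R0 a) (Vn := sum_f_R0 (fun x => a x * exp (th * INR x))));
      auto. intro M. apply sum_Rle. intros n _. rewrite <- (Rmult_1_r (a n)) at 1.
    apply Rmult_le_compat_l; auto. rewrite <- exp_0. apply exp_le. pose proof (pos_INR n). nra. }
  induction k; intro m.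
  - rewrite P_0. simpl. pose proof (exp_pos (- (th * INR m))). lra.
  - rewrite P_S.
    set (S := sum_f_R0 (fun x => a x * exp (th * INR x) * exp (- (th * INR m))) m).
    assert (Tl : 1 - sum_f_R0 a m <= exp (- (th * INR m)) * H - S).
    { apply (tail_cmp a (fun x => a x * exp (th * INR x) * exp (- (th * INR m))) 1); auto.
      - apply (infsum_ext (fun x => exp (- (th * INR m)) * (a x * exp (th * INR x)))).
        + intro n. ring.
        + apply infsum_scal. exact HH.
      - intros x Hx. rewrite Rmult_assoc, <- exp_plus. rewrite <- (Rmult_1_r (a x)) at 1.
        apply Rmult_le_compat_l; auto. rewrite <- exp_0. apply exp_le.
        assert (INR m <= INR x) by (apply le_INR; lia). nra. }
    pose proof (a_partial m).
    assert (Hk : 1 <= H ^ k) by (apply pow_R1_Rle; auto).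
    assert (E1 : 1 - sum_f_R0 (fun x => a x * P k (m - x)%nat) m
             = (1 - sum_f_R0 a m) + sum_f_R0 (fun x => a x * (1 - P k (m - x)%nat)) m).
    { rewrite (sum_eq (fun x => a x * (1 - P k (m - x)%nat)) (fun x => a x - a x * P k (m-x)%nat))
        by (intros; ring).
      rewrite minus_sum. ring. }
    rewrite E1.
    assert (E2 : sum_f_R0 (fun x => a x * (1 - P k (m - x)%nat)) m <= H ^ k * S).
    { unfold S. rewrite <- sum_scal_l. apply sum_Rle. intros n Hn.
      specialize (IHk (m - n)%nat). rewrite minus_INR in IHk by lia.
      apply Rle_trans with (a n * (exp (- (th * (INR m - INR n))) * H ^ k)).
      - apply Rmult_le_compat_l; auto.
      - right. replace (exp (- (th * (INR m - INR n)))) with (exp (th * INR n) * exp (- (th * INR m)))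
          by (rewrite <- exp_plus; f_equal; ring). ring. }
    assert (0 <= S).
    { unfold S. apply cond_pos_sum. intro n. apply Rmult_le_pos; [apply Rmult_le_pos; auto|]; left; apply exp_pos. }
    assert (0 <= exp (- (th * INR m)) * H - S) by lra.
    simpl. apply Rle_trans with ((exp (- (th * INR m)) * H - S) + H^k * S); [lra|].
    apply Rle_trans with (H^k * (exp (- (th * INR m)) * H - S) + H^k * S); [|right; ring].
    apply Rplus_le_compat_r. rewrite <- (Rmult_1_l (exp (- (th * INR m)) * H - S)) at 1.
    apply Rmult_le_compat_r; lra.
Qed.

End Chernoff.

Lemma taylor1 x : 0 <= x -> exp (-x) <= 1 - x + x^2.
Proof.
  intro Hx. pose proof (exp_ineq1_le x). rewrite exp_Ropp.
  assert (0 < 1 + x) by lra.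
  apply Rle_trans with (/ (1 + x)).
  - apply Rinv_le_contravar; lra.
  - apply (Rmult_le_reg_l (1+x)); auto. rewrite Rinv_r by lra.
    replace ((1 + x) * (1 - x + x ^ 2)) with (1 + x^3) by ring.
    pose proof (pow_le x 3 Hx). lra.
Qed.

Lemma taylor2 x : 0 <= x -> exp x <= 1 + x + x^2 * exp x.
Proof.
  intro Hx. pose proof (exp_ineq1_le (-x)). pose proof (exp_pos x).
  assert (exp x - 1 <= x * exp x).
  { assert (exp (-x) * exp x = 1) by (rewrite <- exp_plus; replace (-x + x) with 0 by ring; apply exp_0).
    nra. }
  assert (x * (exp x - 1) <= x * (x * exp x)) by (apply Rmult_le_compat_l; lra).
  assert (exp x - 1 - x <= x * (exp x - 1)) by nra.
  simpl. nra.
Qed.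

Lemma mom1 q c mu M : qok q -> 0 < c -> c <= mu ->
  sum_f_R0 (fun n => INR n * (q n * exp (- (mu * INR n)))) M <= 2/c * E (c/2).
Proof.
  intros Hq Hc Hm. eapply Rle_trans; [|apply Rmult_le_compat_l; [left; apply Rdiv_lt_0_compat; lra| apply (geom (c/2) M); lra]].
  rewrite <- sum_scal_l. apply sum_Rle. intros n _.
  pose proof (n_exp c n Hc). pose proof (Hq n). pose proof (pos_INR n).
  assert (exp (- (mu * INR n)) <= exp (- (c * INR n))) by (apply exp_le; nra).
  pose proof (exp_pos (- (mu * INR n))).
  apply Rle_trans with (INR n * exp (- (c * INR n))); [|exact H].
  rewrite <- Rmult_assoc, (Rmult_comm (INR n)), Rmult_assoc.
  rewrite <- (Rmult_1_l (INR n * exp (- (c * INR n)))).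
  apply Rmult_le_compat; try lra. apply Rmult_le_pos; lra. apply Rmult_le_compat_l; lra.
Qed.

Lemma mom2 q c mu M : qok q -> 0 < c -> c <= mu ->
  sum_f_R0 (fun n => INR n ^ 2 * (q n * exp (- (mu * INR n)))) M <= (4/c)^2 * E (c/2).
Proof.
  intros Hq Hc Hm. eapply Rle_trans; [|apply Rmult_le_compat_l; [apply pow_le; left; apply Rdiv_lt_0_compat; lra| apply (geom (c/2) M); lra]].
  rewrite <- sum_scal_l. apply sum_Rle. intros n _.
  pose proof (n2_exp c n Hc). pose proof (Hq n). pose proof (pos_INR n).
  assert (exp (- (mu * INR n)) <= exp (- (c * INR n))) by (apply exp_le; nra).
  pose proof (exp_pos (- (mu * INR n))). pose proof (pow_le (INR n) 2 H1).
  apply Rle_trans with (INR n ^ 2 * exp (- (c * INR n))); [|exact H].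
  rewrite <- Rmult_assoc, (Rmult_comm (INR n ^ 2)), Rmult_assoc.
  rewrite <- (Rmult_1_l (INR n ^ 2 * exp (- (c * INR n)))).
  apply Rmult_le_compat; try lra. apply Rmult_le_pos; lra. apply Rmult_le_compat_l; lra.
Qed.

Lemma pxi_eq delta T n : pxi delta T n = exp delta * (q T n * exp (- (phi delta T * INR n))).
Proof. unfold pxi. ring. Qed.

Lemma pxi_nonneg delta T n : 0 <= pxi delta T n.
Proof. rewrite pxi_eq. apply Rmult_le_pos; [left; apply exp_pos|]. apply Rmult_le_pos; [apply q_nonneg| left; apply exp_pos]. Qed.

Lemma pxi_0 delta T : pxi delta T 0%nat = 0.
Proof. unfold pxi. rewrite q_0. ring. Qed.

Lemma pxi_sum delta T :
  infinite_sum (fun n => q T n * exp (- (phi delta T * INR n))) (exp (- delta)) ->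
  infinite_sum (pxi delta T) 1.
Proof.
  intro H. apply (infsum_scal (exp delta)) in H.
  replace (exp delta * exp (- delta)) with 1 in H by (rewrite <- exp_plus; replace (delta + - delta) with 0 by ring; rewrite exp_0; ring).
  apply (infsum_ext _ _ _ (fun n => eq_sym (pxi_eq delta T n)) H).
Qed.

Lemma mean_spec delta : 0 < delta ->
  infinite_sum (fun n => INR n * pxi delta None n) (mean_xi delta None).
Proof.
  intro Hd. pose proof (lam_pos delta Hd) as HL. unfold mean_xi. apply epsilon_spec.
  destruct (conv_bounded (fun n => INR n * pxi delta None n) (exp delta * (2/(phi delta None) * E (phi delta None/2)))) as [l [Hl _]].
  - intro n. apply Rmult_le_pos; [apply pos_INR| apply pxi_nonneg].
  - intro M. rewrite (sum_eq _ (fun n => exp delta * (INR n * (q None n * exp (- (phi delta None * INR n))))))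
      by (intros; rewrite pxi_eq; ring).
    rewrite sum_scal_l. apply Rmult_le_compat_l; [left; apply exp_pos|].
    apply mom1; [apply qok_q| auto| lra].
  - exists l. exact Hl.
Qed.

Lemma lim_combo f g1 g2 lf l1 l2 c K : infinite_sum f lf -> infinite_sum g1 l1 -> infinite_sum g2 l2 ->
  (forall M, sum_f_R0 f M <= sum_f_R0 g1 M + c * sum_f_R0 g2 M + K) -> lf <= l1 + c*l2 + K.
Proof.
  intros Hf H1 H2 HM.
  apply (Rle_cv_lim (Un := sum_f_R0 f) (Vn := fun M => sum_f_R0 g1 M + c * sum_f_R0 g2 M + K)); auto.
  apply CV_plus; [|apply cv_const]. apply CV_plus; auto.
  apply (CV_mult (fun _ => c)); [apply cv_const| exact H2].
Qed.

Lemma mean_ge1 delta : 0 < delta -> 1 <= mean_xi delta None.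
Proof.
  intro Hd.
  apply (Rle_cv_lim (Un := sum_f_R0 (pxi delta None)) (Vn := sum_f_R0 (fun n => INR n * pxi delta None n))).
  - intro M. apply sum_Rle. intros n _. destruct n.
    + rewrite pxi_0. simpl. lra.
    + pose proof (pxi_nonneg delta None (S n)). rewrite <- (Rmult_1_l (pxi _ _ _)) at 1.
      apply Rmult_le_compat_r; auto. rewrite S_INR. pose proof (pos_INR n). lra.
  - apply pxi_sum, phi_None_spec; auto.
  - apply mean_spec; auto.
Qed.

Definition C2 delta := exp delta * ((4/(phi delta None/2))^2 * E (phi delta None/2/2)).

Lemma C2_pos delta : 0 < delta -> 0 < C2 delta.
Proof.
  intro Hd. pose proof (lam_pos delta Hd). unfold C2. apply Rmult_lt_0_compat; [apply exp_pos|].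
  apply Rmult_lt_0_compat; [apply pow_lt; apply Rdiv_lt_0_compat; lra| apply E_pos; lra].
Qed.

Lemma sum_combo3 (f1 f2 f3 : nat -> R) c1 c2 M :
  sum_f_R0 (fun n => f1 n + c1 * f2 n + c2 * f3 n) M =
  sum_f_R0 f1 M + c1 * sum_f_R0 f2 M + c2 * sum_f_R0 f3 M.
Proof. rewrite !sum_plus, !sum_scal_l. ring. Qed.

Lemma Ginf delta th : 0 < delta -> 0 < th ->
  exp delta * Qf (q None) (phi delta None + th) <= 1 - th * mean_xi delta None + th^2 * C2 delta.
Proof.
  intros Hd Hth. pose proof (lam_pos delta Hd) as HL. set (L := phi delta None) in *.
  replace (1 - th * mean_xi delta None + th^2 * C2 delta) with
    (1 + (-th) * mean_xi delta None + th^2 * C2 delta) by ring.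
  apply (lim_combo (fun n => exp delta * (q None n * exp (- ((L + th) * INR n))))
                   (pxi delta None) (fun n => INR n * pxi delta None n)).
  - apply infsum_scal. apply Qf_spec; [apply qok_q| lra].
  - apply pxi_sum, phi_None_spec; auto.
  - apply mean_spec; auto.
  - intro M.
    apply Rle_trans with (sum_f_R0 (fun n => pxi delta None n + (-th) * (INR n * pxi delta None n)
                              + th^2 * (INR n ^ 2 * pxi delta None n)) M).
    + apply sum_Rle. intros n _.
      replace (exp delta * (q None n * exp (- ((L + th) * INR n)))) with
        (pxi delta None n * exp (- (th * INR n)))
        by (rewrite pxi_eq; fold L; replace (exp (- ((L + th) * INR n))) with (exp (- (L * INR n)) * exp (- (th * INR n)))
             by (rewrite <- exp_plus; f_equal; ring); ring).
      pose proof (taylor1 (th * INR n) ltac:(pose proof (pos_INR n); nra)).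
      pose proof (pxi_nonneg delta None n).
      apply Rle_trans with (pxi delta None n * (1 - th * INR n + (th * INR n)^2)).
      * apply Rmult_le_compat_l; auto.
      * right. ring.
    + rewrite sum_combo3. apply Rplus_le_compat_l.
      apply Rmult_le_compat_l; [apply pow_le; lra|].
      rewrite (sum_eq _ (fun n => exp delta * (INR n ^ 2 * (q None n * exp (- (L * INR n))))))
        by (intros; rewrite pxi_eq; fold L; ring).
      rewrite sum_scal_l. unfold C2. fold L. apply Rmult_le_compat_l; [left; apply exp_pos|].
      apply mom2; [apply qok_q| lra| lra].
Qed.

Lemma Hinf delta th : 0 < delta -> 0 < th -> th <= phi delta None / 2 ->
  exp delta * Qf (q None) (phi delta None - th) <= 1 + th * mean_xi delta None + th^2 * C2 delta.
Proof.
  intros Hd Hth Hth2. pose proof (lam_pos delta Hd) as HL. set (L := phi delta None) in *.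
  apply (lim_combo (fun n => exp delta * (q None n * exp (- ((L - th) * INR n))))
                   (pxi delta None) (fun n => INR n * pxi delta None n)).
  - apply infsum_scal. apply Qf_spec; [apply qok_q| lra].
  - apply pxi_sum, phi_None_spec; auto.
  - apply mean_spec; auto.
  - intro M.
    apply Rle_trans with (sum_f_R0 (fun n => pxi delta None n + th * (INR n * pxi delta None n)
                              + th^2 * (INR n ^ 2 * pxi delta None n * exp (th * INR n))) M).
    + apply sum_Rle. intros n _.
      replace (exp delta * (q None n * exp (- ((L - th) * INR n)))) with
        (pxi delta None n * exp (th * INR n))
        by (rewrite pxi_eq; fold L; replace (exp (- ((L - th) * INR n))) with (exp (- (L * INR n)) * exp (th * INR n))
             by (rewrite <- exp_plus; f_equal; ring); ring).
      pose proof (taylor2 (th * INR n) ltac:(pose proof (pos_INR n); nra)).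
      pose proof (pxi_nonneg delta None n).
      apply Rle_trans with (pxi delta None n * (1 + th * INR n + (th * INR n)^2 * exp (th * INR n))).
      * apply Rmult_le_compat_l; auto.
      * right. ring.
    + rewrite sum_combo3. apply Rplus_le_compat_l.
      apply Rmult_le_compat_l; [apply pow_le; lra|].
      rewrite (sum_eq _ (fun n => exp delta * (INR n ^ 2 * (q None n * exp (- ((L - th) * INR n))))))
        by (intros n _; rewrite pxi_eq; fold L; replace (exp (- ((L - th) * INR n))) with (exp (- (L * INR n)) * exp (th * INR n))
             by (rewrite <- exp_plus; f_equal; ring); ring).
      rewrite sum_scal_l. unfold C2. fold L. apply Rmult_le_compat_l; [left; apply exp_pos|].
      apply mom2; [apply qok_q| lra| lra].
Qed.

Lemma GH_close delta t th eta s : 0 < delta -> Rabs s <= th -> 0 <= eta -> eta + th <= phi delta None / 2 ->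
  phi delta None - eta <= phi delta (Some t) <= phi delta None + eta ->
  Rabs (exp delta * Qf (q (Some t)) (phi delta (Some t) + s) - exp delta * Qf (q None) (phi delta None + s))
  <= exp delta * (exp (-(phi delta None/2/2 * INR t)) * E (phi delta None/2/2)
                  + eta * (2/(phi delta None/2) * E (phi delta None/2/2))).
Proof.
  intros Hd Hs He Het Hp. pose proof (lam_pos delta Hd) as HL.
  set (L := phi delta None) in *. set (p := phi delta (Some t)) in *.
  apply abs_bnd in Hs.
  rewrite <- Rmult_minus_distr_l, Rabs_mult, (Rabs_pos_eq (exp delta)) by (left; apply exp_pos).
  apply Rmult_le_compat_l; [left; apply exp_pos|].
  replace (Qf (q (Some t)) (p + s) - Qf (q None) (L + s)) with
    ((Qf (q (Some t)) (p + s) - Qf (q None) (p + s)) + (Qf (q None) (p + s) - Qf (q None) (L + s))) by ring.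
  eapply Rle_trans; [apply Rabs_triang|]. apply Rplus_le_compat.
  - apply (Qf_tail _ _ t (L/2)); try apply qok_q; try lra.
    intros; apply q_eq; auto.
  - eapply Rle_trans; [apply (Qf_lip (q None) (L/2)); try apply qok_q; lra|].
    apply Rmult_le_compat_r.
    + left. apply Rmult_lt_0_compat; [apply Rdiv_lt_0_compat; lra| apply E_pos; lra].
    + replace (p + s - (L + s)) with (p - L) by ring. apply Rabs_le. lra.
Qed.

Lemma P_tau_le_0 delta T m : P_tau_le delta T 0 m = 1.
Proof. unfold P_tau_le. simpl. unfold prodR. simpl. ring. Qed.

Lemma P_tau_le_S delta T k m : P_tau_le delta T (S k) m =
  sum_f_R0 (fun x => pxi delta T x * P_tau_le delta T k (m - x)%nat) m.
Proof.
  unfold P_tau_le at 1. cbn [comps]. rewrite sumR_map_flat.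
  transitivity (sumR (map (fun x => pxi delta T x * P_tau_le delta T k (m-x)%nat) (seq 1 m))).
  { f_equal. apply map_ext. intro x. rewrite map_map. unfold P_tau_le. rewrite <- sumR_scal. reflexivity. }
  rewrite sumR_seq1. rewrite pxi_0. ring.
Qed.

Lemma sumR_le {A} (f g : A -> R) L : (forall x, f x <= g x) -> sumR (map f L) <= sumR (map g L).
Proof. intro H. induction L; simpl; [lra|]. pose proof (H a). lra. Qed.

Lemma tele_lo (f : nat -> R) K L :
  sumR (map (fun k => if (k <? K)%nat then f k - f (S k) else 0) (seq 0 L)) = f 0%nat - f (Nat.min K L).
Proof.
  induction L.
  - simpl. rewrite Nat.min_0_r. ring.
  - rewrite seq_S, map_app, sumR_app, IHL. simpl. destruct (Nat.ltb_spec L K).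
    + rewrite (Nat.min_r K (S L)), (Nat.min_r K L) by lia. ring.
    + rewrite (Nat.min_l K (S L)), (Nat.min_l K L) by lia. ring.
Qed.

Lemma tele_hi (f : nat -> R) K L :
  sumR (map (fun k => if (K <=? k)%nat then f k - f (S k) else 0) (seq 0 L)) = f (Nat.min K L) - f L.
Proof.
  induction L.
  - simpl. rewrite Nat.min_0_r. ring.
  - rewrite seq_S, map_app, sumR_app, IHL. simpl. destruct (Nat.leb_spec K L).
    + rewrite (Nat.min_l K (S L)), (Nat.min_l K L) by lia. ring.
    + rewrite (Nat.min_r K (S L)), (Nat.min_r K L) by lia. ring.
Qed.

Lemma dev_bound delta T N s eps K1 K2 :
  infinite_sum (pxi delta T) 1 -> (1 <= N)%nat ->
  (forall k, INR k < (s - eps) * INR N -> (k < K1)%nat) ->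
  (forall k, (s + eps) * INR N < INR k -> (K2 <= k)%nat) ->
  P_dev delta T N s eps <= (1 - P_tau_le delta T K1 N) + P_tau_le delta T K2 N.
Proof.
  intros Hs HN H1 H2.
  set (P := P_tau_le delta T).
  pose proof (pxi_nonneg delta T) as Ann. pose proof (pxi_0 delta T) as A0'.
  pose proof (P_tau_le_0 delta T) as P0. pose proof (P_tau_le_S delta T) as PS.
  fold P in P0, PS.
  pose proof (P_decr _ _ Ann Hs P0 PS) as Pdec.
  pose proof (P_nonneg _ _ Ann P0 PS) as Pnn.
  pose proof (P_zero _ _ A0' PS) as Pz.
  assert (Pmono : forall k1 k2 m, (k1 <= k2)%nat -> P k2 m <= P k1 m).
  { intros k1 k2 m Hk. induction Hk; [lra|]. pose proof (Pdec m0 m). lra. }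
  assert (HNp : 0 < INR N) by (apply lt_0_INR; lia).
  unfold P_dev.
  apply Rle_trans with (sumR (map (fun k => (if (k <? K1)%nat then P k N - P (S k) N else 0)
                         + (if (K2 <=? k)%nat then P k N - P (S k) N else 0)) (seq 0 (S N)))).
  - apply sumR_le. intro k. pose proof (Pdec k N).
    assert (0 <= (if (k <? K1)%nat then P k N - P (S k) N else 0)) by (destruct (k <? K1)%nat; lra).
    assert (0 <= (if (K2 <=? k)%nat then P k N - P (S k) N else 0)) by (destruct (K2 <=? k)%nat; lra).
    destruct (Rlt_dec eps (Rabs (INR k / INR N - s))) as [Hd|]; [|lra].
    unfold P_L_eq. fold P.
    assert (Ek : INR k = INR k / INR N * INR N) by (field; lra).
    destruct (Rle_lt_dec 0 (INR k / INR N - s)) as [Hr|Hr].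
    + rewrite Rabs_pos_eq in Hd by lra.
      assert (Hk : (s + eps) * INR N < INR k).
      { rewrite Ek. apply Rmult_lt_compat_r; lra. }
      specialize (H2 k Hk). destruct (Nat.leb_spec K2 k); [|lia]. lra.
    + rewrite Rabs_left in Hd by lra.
      assert (Hk : INR k < (s - eps) * INR N).
      { rewrite Ek. apply Rmult_lt_compat_r; lra. }
      specialize (H1 k Hk). destruct (Nat.ltb_spec k K1); [|lia]. lra.
  - rewrite sumR_plus, (tele_lo (fun k => P k N)), (tele_hi (fun k => P k N)).
    rewrite P0. rewrite (Pz (S N) N) by lia.
    assert (P K1 N <= P (Nat.min K1 (S N)) N) by (apply Pmono; lia).
    destruct (Nat.leb_spec K2 (S N)).
    + rewrite (Nat.min_l K2 (S N)) by lia. lra.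
    + rewrite (Nat.min_r K2 (S N)) by lia. rewrite (Pz (S N) N) by lia. pose proof (Pnn K2 N). lra.
Qed.

Lemma up_K1 x k : INR k < x -> (k < Z.to_nat (up x))%nat.
Proof.
  intro H. destruct (archimed x) as [Ha _]. rewrite INR_IZR_INZ in H.
  assert (Z.of_nat k < up x)%Z by (apply lt_IZR; lra). lia.
Qed.

Lemma up_K2 x k : x < INR k -> (Z.to_nat (up x) <= k)%nat.
Proof.
  intro H. destruct (archimed x) as [Ha Hb]. rewrite INR_IZR_INZ in H.
  destruct (Z_le_gt_dec (up x) (Z.of_nat k)); [lia|].
  assert (Z.of_nat k + 1 <= up x)%Z by lia. apply IZR_le in H0. rewrite plus_IZR in H0. simpl in H0. lra.
Qed.

Lemma up_K2_ge x : 0 <= x -> x <= INR (Z.to_nat (up x)).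
Proof.
  intro H. destruct (archimed x) as [Ha _].
  assert (0 < up x)%Z by (apply lt_IZR; simpl; lra).
  rewrite INR_IZR_INZ, Z2Nat.id by lia. lra.
Qed.

Lemma up_K1_le x : INR (Z.to_nat (up x)) <= Rmax 0 x + 1.
Proof.
  destruct (archimed x) as [_ Hb]. pose proof (Rmax_l 0 x). pose proof (Rmax_r 0 x).
  destruct (Z_le_gt_dec (up x) 0).
  - assert (Z.to_nat (up x) = 0%nat) as -> by lia. simpl. lra.
  - rewrite INR_IZR_INZ, Z2Nat.id by lia. lra.
Qed.

Lemma Qf_nonneg q lam : qok q -> 0 < lam -> 0 <= Qf q lam.
Proof.
  intros Hq Hl. eapply Rle_trans; [|apply (partial_le_lim _ _ 0 (Qf_spec q lam Hq Hl))].
  - simpl. apply Rmult_le_pos; [apply Hq| left; apply exp_pos].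
  - intro n. apply Rmult_le_pos; [apply Hq| left; apply exp_pos].
Qed.

Theorem lemma8 (delta : R) (hdelta : 0 < delta) :
  let s_inf := 1 / mean_xi delta None in
  forall eps : R, 0 < eps ->
  exists T0 : nat,
    forall eta : R, 0 < eta ->
    exists N0 : nat, forall N : nat, (N0 <= N)%nat ->
      forall T : nat, (0 < T)%nat -> Nat.Even T -> (T0 <= T)%nat ->
        P_dev delta (Some T) N s_inf eps <= eta.
Proof.
  intros s eps Heps.
  assert (Hs_def : s = 1 / mean_xi delta None) by reflexivity. clearbody s.
  pose proof (lam_pos delta hdelta) as HL. set (L := phi delta None) in *.
  pose proof (mean_ge1 delta hdelta) as Hm1. set (m := mean_xi delta None) in *.
  assert (Hsm : s * m = 1). { rewrite Hs_def. field. lra. }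
  assert (Hs0 : 0 < s) by (rewrite Hs_def; apply Rdiv_lt_0_compat; lra).
  pose proof (C2_pos delta hdelta) as HC. set (C := C2 delta) in *.
  set (Kl := 2/(L/2) * E (L/2/2)).
  assert (HKl : 0 < Kl) by (apply Rmult_lt_0_compat; [apply Rdiv_lt_0_compat; lra| apply E_pos; lra]).
  set (th := Rmin (L/4) (Rmin (eps*m/(2*(C+1)*(s+eps))) (eps*m*m/(2*(C+1))))).
  assert (Hth0 : 0 < th).
  { unfold th. apply Rmin_pos; [lra|]. apply Rmin_pos; apply Rdiv_lt_0_compat; repeat apply Rmult_lt_0_compat; lra. }
  assert (Hth1 : th <= L/4) by apply Rmin_l.
  assert (Hth2 : th * (C+1) * (s+eps) <= eps*m/2).
  { assert (th <= eps*m/(2*(C+1)*(s+eps))) by (eapply Rle_trans; [apply Rmin_r| apply Rmin_l]).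
    apply (Rmult_le_compat_r ((C+1)*(s+eps))) in H; [|nra].
    replace (eps * m / (2 * (C + 1) * (s + eps)) * ((C + 1) * (s + eps))) with (eps*m/2) in H by (field; nra).
    nra. }
  assert (Hth3 : th * (C+1) * s <= eps*m/2).
  { assert (th <= eps*m*m/(2*(C+1))) by (eapply Rle_trans; [apply Rmin_r| apply Rmin_r]).
    apply (Rmult_le_compat_r ((C+1)*s)) in H; [|nra].
    replace (eps * m * m / (2 * (C + 1)) * ((C + 1) * s)) with (eps*m/2 * (s*m)) in H by (field; nra).
    rewrite Hsm in H. nra. }
  set (rho := th^2).
  set (beta := th*m - th^2*(C+1)).
  set (beta' := th*m + th^2*(C+1)).
  set (gam := Rmin (eps*th*m/2) th).
  assert (Hgam0 : 0 < gam) by (unfold gam; apply Rmin_pos; [apply Rdiv_lt_0_compat; [repeat apply Rmult_lt_0_compat|]|]; lra).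
  assert (Hgam1 : gam <= th) by apply Rmin_r.
  assert (Hgam2 : gam <= eps*th*m/2) by apply Rmin_l.
  assert (HU : th + gam <= beta * (s + eps)).
  { unfold beta. assert (th*m*s = th) by (rewrite Rmult_assoc, (Rmult_comm m), Hsm; ring).
    assert (th^2*(C+1)*(s+eps) <= th*(eps*m/2)) by (simpl; nra). nra. }
  assert (Hbeta : 0 <= beta).
  { assert (0 < beta * (s+eps)) by lra. destruct (Rle_lt_dec 0 beta); auto. nra. }
  assert (Hbeta' : 0 <= beta') by (unfold beta'; pose proof (pow_le th 2 ltac:(lra)); nra).
  assert (HLo : Rmax 0 (s - eps) * beta' <= th - gam).
  { destruct (Rle_dec (s - eps) 0).
    - rewrite Rmax_left by lra. lra.
    - rewrite Rmax_right by lra. unfold beta'.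
      assert (th*m*s = th) by (rewrite Rmult_assoc, (Rmult_comm m), Hsm; ring).
      assert ((s - eps) * (th^2*(C+1)) <= th * (eps*m/2)).
      { simpl. assert ((s - eps) * (th*(C+1)) <= s * (th*(C+1))) by (apply Rmult_le_compat_r; nra).
        nra. }
      nra. }
  set (eta1 := Rmin (L/4) (rho / (2 * exp delta * Kl))).
  assert (He1 : 0 < eta1).
  { unfold eta1. apply Rmin_pos; [lra|]. apply Rdiv_lt_0_compat; [unfold rho; simpl; nra|].
    pose proof (exp_pos delta). nra. }
  assert (He1a : eta1 <= L/4) by apply Rmin_l.
  assert (He1b : exp delta * (eta1 * Kl) <= rho/2).
  { assert (eta1 <= rho / (2 * exp delta * Kl)) by apply Rmin_r. pose proof (exp_pos delta).
    apply (Rmult_le_compat_r (exp delta * Kl)) in H; [|nra].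
    replace (rho / (2 * exp delta * Kl) * (exp delta * Kl)) with (rho/2) in H by (field; nra). nra. }
  destruct (phi_T_close delta eta1 hdelta He1 ltac:(fold L; lra)) as [T1 HT1].
  destruct (exp_tail_small (L/2/2) (exp delta * E (L/2/2)) (rho/2) ltac:(lra)
     ltac:(apply Rmult_lt_0_compat; [apply exp_pos| apply E_pos; lra]) ltac:(unfold rho; simpl; nra)) as [T2 HT2].
  exists (Nat.max T1 T2).
  intros eta0 Heta0.
  destruct (exp_tail_small gam (exp beta' + 1) eta0 Hgam0 ltac:(pose proof (exp_pos beta'); lra) Heta0) as [N1 HN1].
  exists (Nat.max N1 1). intros N HN t Ht _ HtT.
  destruct (HT1 t ltac:(lia)) as [Hphi Hpb]. fold L in Hpb.
  specialize (HT2 t ltac:(lia)). specialize (HN1 N ltac:(lia)).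
  set (p := phi delta (Some t)) in *.
  assert (Hcl : forall s', Rabs s' <= th ->
     Rabs (exp delta * Qf (q (Some t)) (p + s') - exp delta * Qf (q None) (L + s')) <= rho).
  { intros s' Hs'. eapply Rle_trans; [apply (GH_close delta t th eta1 s'); auto; try lra; fold L; lra|].
    fold L. fold Kl. rewrite Rmult_plus_distr_l. lra. }
  set (G := exp delta * Qf (q (Some t)) (p + th)).
  set (H := exp delta * Qf (q (Some t)) (p + - th)).
  assert (HG : G <= exp (- beta)).
  { pose proof (Hcl th ltac:(rewrite Rabs_pos_eq; lra)) as X. apply abs_bnd in X.
    pose proof (Ginf delta th hdelta Hth0) as Y. fold L m C in Y.
    pose proof (exp_ineq1_le (- beta)). unfold beta in *. unfold rho in X. fold G in X. simpl in *. nra. }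
  assert (HH : H <= exp beta').
  { pose proof (Hcl (-th) ltac:(rewrite Rabs_Ropp, Rabs_pos_eq; lra)) as X. apply abs_bnd in X.
    pose proof (Hinf delta th hdelta Hth0 ltac:(fold L; lra)) as Y. fold L m C in Y.
    replace (L + - th) with (L - th) in X by ring.
    pose proof (exp_ineq1_le beta'). unfold beta' in *. unfold rho in X. fold H in X. simpl in *. nra. }
  assert (Hp0 : 0 < p - th) by lra.
  assert (HG0 : 0 <= G) by (unfold G; apply Rmult_le_pos; [left; apply exp_pos| apply Qf_nonneg; [apply qok_q| lra]]).
  assert (HH0 : 0 <= H) by (unfold H; apply Rmult_le_pos; [left; apply exp_pos| apply Qf_nonneg; [apply qok_q| lra]]).
  set (a := pxi delta (Some t)).
  assert (Asum : infinite_sum a 1) by (apply pxi_sum; exact Hphi).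
  pose proof (pxi_nonneg delta (Some t)) as Ann. pose proof (P_tau_le_0 delta (Some t)) as P0.
  pose proof (P_tau_le_S delta (Some t)) as PS.
  assert (Gser : infinite_sum (fun x => a x * exp (- (th * INR x))) G).
  { apply (infsum_ext (fun n => exp delta * (q (Some t) n * exp (- ((p + th) * INR n))))).
    - intro n. unfold a. rewrite pxi_eq. fold p.
      replace (exp (- ((p + th) * INR n))) with (exp (- (p * INR n)) * exp (- (th * INR n)))
        by (rewrite <- exp_plus; f_equal; ring). ring.
    - apply infsum_scal. apply Qf_spec; [apply qok_q| lra]. }
  assert (Hser : infinite_sum (fun x => a x * exp (th * INR x)) H).
  { apply (infsum_ext (fun n => exp delta * (q (Some t) n * exp (- ((p + - th) * INR n))))).
    - intro n. unfold a. rewrite pxi_eq. fold p.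
      replace (exp (- ((p + - th) * INR n))) with (exp (- (p * INR n)) * exp (th * INR n))
        by (rewrite <- exp_plus; f_equal; ring). ring.
    - apply infsum_scal. apply Qf_spec; [apply qok_q| lra]. }
  assert (Gpart : forall M, sum_f_R0 (fun x => a x * exp (- (th * INR x))) M <= G).
  { intro M. apply partial_le_lim; auto. intro n. apply Rmult_le_pos; [apply Ann| left; apply exp_pos]. }
  pose proof (chernoff_up a _ Ann P0 PS th G ltac:(lra) HG0 Gpart) as CU.
  pose proof (chernoff_low a _ Ann Asum P0 PS th H ltac:(lra) Hser) as CL.
  set (K1 := Z.to_nat (up ((s - eps) * INR N))).
  set (K2 := Z.to_nat (up ((s + eps) * INR N))).
  pose proof (pos_INR N) as HN0.
  pose proof (dev_bound delta (Some t) N s eps K1 K2 Asum ltac:(lia)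
    (fun k Hk => up_K1 _ k Hk) (fun k Hk => up_K2 _ k Hk)) as D.
  assert (U : P_tau_le delta (Some t) K2 N <= exp (- (gam * INR N))).
  { eapply Rle_trans; [apply CU|].
    assert (G ^ K2 <= exp (- beta) ^ K2) by (apply pow_incr; lra).
    rewrite exp_pow_nat in H0.
    pose proof (up_K2_ge ((s+eps) * INR N) ltac:(nra)). fold K2 in H1.
    apply Rle_trans with (exp (th * INR N) * exp (- beta * INR K2)).
    - apply Rmult_le_compat_l; [left; apply exp_pos| exact H0].
    - rewrite <- exp_plus. apply exp_le.
      assert (beta * ((s+eps) * INR N) <= beta * INR K2) by (apply Rmult_le_compat_l; lra).
      assert ((th + gam) * INR N <= beta * (s + eps) * INR N) by (apply Rmult_le_compat_r; lra).
      nra. }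
  assert (Lw : 1 - P_tau_le delta (Some t) K1 N <= exp beta' * exp (- (gam * INR N))).
  { eapply Rle_trans; [apply CL|].
    assert (H ^ K1 <= exp beta' ^ K1) by (apply pow_incr; lra).
    rewrite exp_pow_nat in H0.
    pose proof (up_K1_le ((s - eps) * INR N)). fold K1 in H1.
    apply Rle_trans with (exp (- (th * INR N)) * exp (beta' * INR K1)).
    - apply Rmult_le_compat_l; [left; apply exp_pos| exact H0].
    - rewrite <- !exp_plus. apply exp_le.
      assert (Rmax 0 ((s - eps) * INR N) * beta' <= (th - gam) * INR N).
      { destruct (Rle_dec (s - eps) 0).
        - rewrite Rmax_left by nra. nra.
        - rewrite Rmax_right by nra. rewrite Rmax_right in HLo by lra. nra. }
      assert (beta' * INR K1 <= beta' * (Rmax 0 ((s - eps) * INR N) + 1)) by (apply Rmult_le_compat_l; lra).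
      nra. }
  lra.
Qed.
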